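(* Let $F_1,\dots,F_n:\mathbb{R}^d\to\mathbb{R}^d$ with each $F_i$ being $L_i$-Lipschitz, let $F=\frac1n\sum_{i=1}^nF_i$, and let $x^*$ satisfy $F(x^* )=0$. Let $v\in\mathbb{R}^n_+$ be a sampling vector (random, $\mathbb{E}[v_i]=1$ for all $i$) and $g(x)=F_v(x):=\frac1n\sum_{i=1}^n v_iF_i(x)$. Then the Expected Residual condition holds, i.e. there is $\delta$ with $$\mathbb{E}\big\|(g(x)-g(x^* ))-(F(x)-F(x^* ))\big\|^2\le\frac{\delta}{2}\|x-x^*\|^2\quad\forall x\in\mathbb{R}^d.$$ If, in addition, $n\ge 2$ and $v$ is a $\tau$-minibatch sampling for some $\tau\in\{1,\dots,n\}$, then this holds with $$\delta=\frac{2}{n\tau}\,\frac{n-\tau}{n-1}\sum_{i=1}^nL_i^2,\qquad\text{and}\qquad \sigma_*^2:=\mathbb{E}\|g(x^* )\|^2=\frac{1}{n\tau}\,\frac{n-\tau}{n-1}\sum_{i=1}^n\|F_i(x^* )\|^2 .$$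
   Context: A $\tau$-minibatch sampling is the random vector $v\in\mathbb{R}^n$ such that for every subset $S\subseteq\{1,\dots,n\}$ with $|S|=\tau$, $\Pr\big[v=\frac{n}{\tau}\sum_{i\in S}e_i\big]=1/\binom{n}{\tau}$ (it satisfies $\mathbb{E}[v_i]=1$). $L_i$-Lipschitz means $\|F_i(x)-F_i(y)\|\le L_i\|x-y\|$ for all $x,y$. For general sampling vectors $v$ the first claim is meant for $v$ with finite second moments $\mathbb{E}[v_i^2]<\infty$. *)

(* Defs.v *)
From HB Require Import structures.
From mathcomp Require Import all_boot all_order all_algebra.
From mathcomp Require Import all_classical all_reals all_analysis.
Set Implicit Arguments. Unset Strict Implicit. Unset Printing Implicit Defensive.
Import Order.TTheory GRing.Theory Num.Theory.
Local Open Scope ring_scope.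
Local Open Scope classical_set_scope.

Definition sqnorm (R : realType) (dim : nat) (x : 'rV[R]_dim) : R :=
  \sum_(j < dim) x ord0 j ^+ 2.

Definition enorm (R : realType) (dim : nat) (x : 'rV[R]_dim) : R :=
  Num.sqrt (sqnorm x).

Definition is_lipschitz (R : realType) (dim : nat) (F : 'rV[R]_dim -> 'rV[R]_dim)
  (L : R) : Prop :=
  forall x y, enorm (F x - F y) <= L * enorm (x - y).

Definition Fmean (R : realType) (dim n : nat)
  (F : 'I_n -> 'rV[R]_dim -> 'rV[R]_dim) (x : 'rV[R]_dim) : 'rV[R]_dim :=
  n%:R^-1 *: \sum_(i < n) F i x.

Definition Fv (R : realType) (dim n : nat)
  (F : 'I_n -> 'rV[R]_dim -> 'rV[R]_dim) (v : 'I_n -> R) (x : 'rV[R]_dim)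
  : 'rV[R]_dim :=
  n%:R^-1 *: \sum_(i < n) v i *: F i x.

Definition minibatch_sampling (dsp : measure_display) (T : measurableType dsp)
  (R : realType) (P : probability T R) (n : nat) (v : 'I_n -> T -> R)
  (tau : nat) : Prop :=
  forall S : {set 'I_n}, #|S| = tau ->
    P [set w : T | forall i : 'I_n, v i w = (if i \in S then n%:R / tau%:R else 0)]
    = ((('C(n, tau))%:R : R)^-1)%:E.

(* Main.v *)
Require Import Defs.
From HB Require Import structures.
From mathcomp Require Import all_boot all_order all_algebra.
From mathcomp Require Import all_classical all_reals all_analysis.
Import Order.TTheory GRing.Theory Num.Theory.
From mathcomp Require Import ring lra.
Import measurable_realfun.
Local Open Scope ring_scope.


Section Comb.
Variable R : realType.
Variables n tau : nat.

Lemma cnt0 : #|[set S : {set 'I_n} | #|S| == tau]| = 'C(n, tau).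
Proof. by rewrite card_draws card_ord. Qed.

Lemma cnt1 (i : 'I_n) : #|[set S : {set 'I_n} | (S \subset [set~ i]) & #|S| == tau]| = 'C(n.-1, tau).
Proof. by rewrite cards_draws cardsC1 card_ord. Qed.

Lemma cnt2 (i j : 'I_n) : i != j -> #|[set S : {set 'I_n} | (S \subset ~: [set i; j]) & #|S| == tau]| = 'C(n.-2, tau).
Proof. move=> ij. rewrite cards_draws cardsCs finset.setCK cards2 ij card_ord.
have -> : (n - 2 = n.-2)%N by rewrite subn2. done. Qed.

Lemma sum_ind (P : pred {set 'I_n}) (Q : pred {set 'I_n}) :
  \sum_(S | P S) ((Q S)%:R : R) = #|[set S | P S & Q S]|%:R.
Proof.
rewrite -sum1_card natr_sum big_mkcond [RHS]big_mkcond /=.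
apply: eq_bigr => S _. rewrite inE. by case: (P S); case: (Q S).
Qed.
End Comb.

Section M.
Variable R : realType.
Variables n tau : nat.
Definition pat (S : {set 'I_n}) (i : 'I_n) : R := if i \in S then n%:R / tau%:R else 0.

Lemma sub_notin1 (S : {set 'I_n}) i : (S \subset [set~ i]) = (i \notin S).
Proof. by rewrite finset.subsetC finset.sub1set finset.in_setC. Qed.

Lemma sub_notin2 (S : {set 'I_n}) i j : (S \subset ~: [set i; j]) = (i \notin S) && (j \notin S).
Proof. by rewrite finset.subsetC finset.subUset !finset.sub1set !finset.in_setC. Qed.

Lemma s0 : \sum_(S : {set 'I_n} | #|S| == tau) (1:R) = ('C(n, tau))%:R.
Proof.
have := sum_ind R n (fun S : {set 'I_n} => #|S| == tau) predT.
rewrite /= => ->. rewrite -cnt0. congr (_%:R). apply: eq_card => S. by rewrite !inE andbT.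
Qed.

Lemma s1 i : \sum_(S : {set 'I_n} | #|S| == tau) (((i \notin S) : nat)%:R : R) = ('C(n.-1, tau))%:R.
Proof.
rewrite (sum_ind R n (fun S : {set 'I_n} => #|S| == tau) (fun S => i \notin S)).
rewrite -(cnt1 n tau i). congr (_%:R). apply: eq_card => S. by rewrite !inE sub_notin1 andbC.
Qed.

Lemma s2 i j : i != j -> \sum_(S : {set 'I_n} | #|S| == tau) ((((i \notin S) && (j \notin S)) : nat)%:R : R) = ('C(n.-2, tau))%:R.
Proof.
move=> ij.
rewrite (sum_ind R n (fun S : {set 'I_n} => #|S| == tau) (fun S => (i \notin S) && (j \notin S))).
rewrite -(@cnt2 n tau i j ij). congr (_%:R). apply: eq_card => S. by rewrite !inE sub_notin2 andbC.
Qed.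

End M.

Lemma M_eq (R : realType) n tau (i j : 'I_n) : (2 <= n)%N -> (1 <= tau <= n)%N ->
  \sum_(S : {set 'I_n} | #|S| == tau) ((@pat R n tau S i - 1) * (@pat R n tau S j - 1))
  = ('C(n,tau))%:R * (((n - tau)%:R / (tau%:R * (n.-1)%:R)) * (n%:R * (i == j)%:R - 1)).
Proof.
move=> n2 /andP[t1 tn].
set c : R := n%:R / tau%:R.
have E : forall S : {set 'I_n}, (@pat R n tau S i - 1) * (@pat R n tau S j - 1) =
   (c-1)^+2 * 1 - ((c-1)*c * (((i \notin S) : nat)%:R) + (c-1)*c * (((j \notin S) : nat)%:R))
   + c^+2 * ((((i \notin S) && (j \notin S)) : nat)%:R).
  move=> S; rewrite /pat -/c; case: (i \in S); case: (j \in S) => /=; ring.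
rewrite (eq_bigr _ (fun S _ => E S)) big_split /= sumrB big_split /=.
rewrite -!mulr_sumr s0 !s1.
have h1 : (n%:R : R) * ('C(n.-1, tau))%:R = (n - tau)%:R * ('C(n, tau))%:R by rewrite -!natrM mul_bin_down.
have h2 : ((n.-1)%:R : R) * ('C(n.-2, tau))%:R = (n.-1 - tau)%:R * ('C(n.-1, tau))%:R.
  by rewrite -!natrM -mul_bin_down.
have [m hm] : exists m, n = (tau + m)%N by exists (n - tau)%N; rewrite subnKC.
have hm' : (n - tau = m)%N by rewrite hm addKn.
rewrite hm' in h1 *.
have h3 : ((n.-1 - tau)%:R : R) * ('C(n.-1, tau))%:R = ((m%:R - 1) * ('C(n.-1, tau))%:R).
  case: m hm hm' h1 => [|m] hm hm' h1.
    by rewrite bin_small ?mulr0 // hm addn0 prednK // (leq_trans _ n2).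
  congr (_ * _). rewrite hm addnS /= addKn.
  by rewrite -[in RHS](addn1 m) natrD addrK.
rewrite h3 in h2.
have en1 : ((n.-1)%:R : R) = n%:R - 1 by rewrite -subn1 natrB // (leq_trans _ n2).
have nz : (n%:R : R) != 0 by rewrite pnatr_eq0 -lt0n (leq_trans _ n2).
have tz : (tau%:R : R) != 0 by rewrite pnatr_eq0 -lt0n.
have n1z : (n%:R - 1 : R) != 0 by rewrite -en1 pnatr_eq0 -lt0n -ltnS prednK // (leq_trans _ n2).
have eN1 : ('C(n.-1, tau))%:R = m%:R * ('C(n, tau))%:R / n%:R :> R.
  by rewrite -h1 mulrAC mulfV ?mul1r.
rewrite en1 in h2.
have eN2 : ('C(n.-2, tau))%:R = (m%:R - 1) * ('C(n.-1, tau))%:R / (n%:R - 1) :> R.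
  by rewrite -h2 mulrAC mulfV ?mul1r.
case: (eqVneq i j) => [<-|ij].
  under eq_bigr => S _ do rewrite andbb.
  rewrite s1 eN1 en1 /c.
  have hn : (n%:R : R) = tau%:R + m%:R by rewrite hm natrD.
  rewrite hn in nz n1z *. have -> : ((true : nat)%:R : R) = 1 by []. rewrite mulr1. field. by rewrite nz tz n1z.
rewrite s2 // eN2 eN1 en1 /c. have -> : ((false : nat)%:R : R) = 0 by []. rewrite mulr0.
have hn : (n%:R : R) = tau%:R + m%:R by rewrite hm natrD.
rewrite hn in nz n1z *. field. by rewrite nz tz n1z.
Qed.

Lemma sum_delta (R : realType) n (F : 'I_n -> R) i : \sum_j F j * ((i == j) : nat)%:R = F i.
Proof.
rewrite (bigD1 i) //= eqxx mulr1 big1 ?addr0 // => j /negbTE.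
by rewrite eq_sym => ->; rewrite mulr0.
Qed.

Lemma sqr_sum (R : realType) n (x : 'I_n -> R) : (\sum_i x i) ^+ 2 = \sum_i \sum_j x i * x j.
Proof. by rewrite expr2 mulr_suml; apply: eq_bigr => i _; rewrite mulr_sumr. Qed.

Lemma scal_eq (R : realType) n tau (b : 'I_n -> R) : (2 <= n)%N -> (1 <= tau <= n)%N ->
  \sum_(S : {set 'I_n} | #|S| == tau) (\sum_i (@pat R n tau S i - 1) * b i) ^+ 2
  = ('C(n,tau))%:R * ((n - tau)%:R / (tau%:R * (n.-1)%:R)) *
     (n%:R * \sum_i b i ^+ 2 - (\sum_i b i) ^+ 2).
Proof.
move=> n2 tn.
under eq_bigr => S _ do rewrite sqr_sum.
rewrite exchange_big /=.
under eq_bigr => i _ do rewrite exchange_big /=.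
set K := ('C(n,tau))%:R * ((n - tau)%:R / (tau%:R * (n.-1)%:R)).
have -> : \sum_i \sum_j \sum_(S : {set 'I_n} | #|S| == tau)
   ((@pat R n tau S i - 1) * b i * ((@pat R n tau S j - 1) * b j))
  = \sum_i K * (n%:R * b i ^+ 2 - \sum_j b i * b j).
  apply: eq_bigr => i _.
  transitivity (\sum_j ((K * n%:R * b i) * b j * (i == j)%:R - K * (b i * b j))).
    apply: eq_bigr => j _.
    have -> : \sum_(S : {set 'I_n} | #|S| == tau)
       ((@pat R n tau S i - 1) * b i * ((@pat R n tau S j - 1) * b j))
      = (b i * b j) * \sum_(S : {set 'I_n} | #|S| == tau) ((@pat R n tau S i - 1) * (@pat R n tau S j - 1)).
      by rewrite mulr_sumr; apply: eq_bigr => S _; ring.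
    rewrite (M_eq R n tau i j n2 tn) /K. ring.
  rewrite sumrB sum_delta.
  have -> : \sum_j K * (b i * b j) = K * \sum_j (b i * b j) by rewrite mulr_sumr.
  ring.
by rewrite -mulr_sumr sumrB -mulr_sumr sqr_sum.
Qed.

Lemma sq_coord (R : realType) n dim (c : 'I_n -> R) (a : 'I_n -> 'rV[R]_dim) :
  sqnorm (\sum_i c i *: a i) = \sum_j (\sum_i c i * a i ord0 j) ^+ 2.
Proof.
rewrite /sqnorm; apply: eq_bigr => j _; rewrite summxE; congr (_ ^+ 2).
by apply: eq_bigr => i _; rewrite mxE.
Qed.

Lemma vec_eq (R : realType) n tau dim (a : 'I_n -> 'rV[R]_dim) : (2 <= n)%N -> (1 <= tau <= n)%N ->
  \sum_(S : {set 'I_n} | #|S| == tau) sqnorm (\sum_i (n%:R^-1 * (@pat R n tau S i - 1)) *: a i)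
  = ('C(n,tau))%:R * ((n - tau)%:R / (tau%:R * (n.-1)%:R)) * n%:R^-2 *
     (n%:R * \sum_i sqnorm (a i) - sqnorm (\sum_i a i)).
Proof.
move=> n2 tn.
under eq_bigr => S _ do rewrite sq_coord.
rewrite exchange_big /=.
have E : forall j, \sum_(S : {set 'I_n} | #|S| == tau) (\sum_i n%:R^-1 * (@pat R n tau S i - 1) * a i ord0 j) ^+ 2
  = n%:R^-2 * (('C(n,tau))%:R * ((n - tau)%:R / (tau%:R * (n.-1)%:R)) *
     (n%:R * \sum_i (a i ord0 j) ^+ 2 - (\sum_i a i ord0 j) ^+ 2)).
  move=> j; rewrite -(scal_eq R n tau (fun i => a i ord0 j) n2 tn) mulr_sumr.
  apply: eq_bigr => S _.
  rewrite -exprVn -exprMn mulr_sumr; congr (_ ^+ 2); apply: eq_bigr => i _; ring.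
under eq_bigr => j _ do rewrite E.
rewrite -mulr_sumr -mulr_sumr sumrB -mulr_sumr.
rewrite [sqnorm (\sum_i a i)]/sqnorm.
under [in RHS]eq_bigr => i _ do rewrite /sqnorm.
rewrite [\sum_i \sum_j _]exchange_big /=.
under [X in _ = _ * (_ - X)]eq_bigr => j _ do rewrite summxE.
ring.
Qed.

Section BSec.
Local Open Scope classical_set_scope.

Lemma meas_sq d (T : measurableType d) (R : realType) n dim (a : 'I_n -> 'rV[R]_dim) (c : 'I_n -> T -> R) :
  (forall i, measurable_fun setT (c i)) -> measurable_fun setT (fun w => sqnorm (\sum_i c i w *: a i)).
Proof.
move=> mc.
rewrite (_ : (fun w => _) = (fun w => \sum_j (\sum_i c i w * a i ord0 j) ^+ 2)); last first.
  by apply/funext => w; rewrite sq_coord.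
apply: measurable_sum => j; apply: measurable_realfun.measurable_funX; apply: measurable_sum => i.
exact: measurable_realfun.measurable_funM.
Qed.

Lemma expect_mb d (T : measurableType d) (R : realType) (P : probability T R) n
  (v : 'I_n -> T -> R) tau (h : ('I_n -> R) -> R) :
  (1 <= tau <= n)%N -> (forall i, measurable_fun setT (v i)) ->
  measurable_fun setT (fun w => h (fun i => v i w)) -> (forall c, 0 <= h c) ->
  minibatch_sampling P v tau ->
  (\int[P]_w (h (fun i => v i w))%:E =
   (('C(n,tau))%:R^-1 * \sum_(S : {set 'I_n} | #|S| == tau) h (@pat R n tau S))%:E)%E.
Proof.
move=> /andP[t1 tn] mv mh h0 mb.
set E := fun S : {set 'I_n} => [set w : T | forall i, v i w = @pat R n tau S i].
have mE : forall S, measurable (E S).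
  move=> S.
  have -> : E S = \bigcap_(i in setT) (v i @^-1` [set @pat R n tau S i]).
    apply/seteqP; split => w /=; first by move=> H i _; exact: H.
    by move=> H i; exact: (H i I).
  apply: fin_bigcap_measurable; first exact: finite_finset.
  move=> i _; rewrite -[X in measurable X]setTI; exact: (mv i).
have cz : (n%:R / tau%:R : R) != 0.
  by rewrite mulf_neq0 // ?invr_eq0 pnatr_eq0 -lt0n // (leq_trans t1 tn).
have EPS : forall S w, E S w -> (fun i => v i w) = @pat R n tau S.
  by move=> S w /= H; apply/funext => i; rewrite H.
set s := seq.filter (fun S : {set 'I_n} => #|S| == tau) (index_enum {set 'I_n}).
have us : uniq s by rewrite filter_uniq // index_enum_uniq.
have tE : trivIset [set` s] E.
  move=> S S' _ _ [w [/EPS H1 /EPS H2]].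
  apply/setP => k. have := congr1 (fun f => f k) (etrans (esym H1) H2).
  rewrite /pat /=. case: (k \in S); case: (k \in S') => //= hc.
    by move: cz; rewrite hc eqxx.
  by move: cz; rewrite -hc eqxx.
set D := \big[setU/set0]_(S <- s) E S.
have mD : measurable D by apply: bigsetU_measurable => S _; exact: mE.
have PE : forall S : {set 'I_n}, #|S| = tau -> P (E S) = (('C(n, tau))%:R^-1)%:E.
  move=> S cS; rewrite -(mb S cS). congr (P _).
have Cz : (('C(n, tau))%:R : R) != 0 by rewrite pnatr_eq0 -lt0n bin_gt0.
have PD : P D = 1%E.
  have h1 := integral_cst P mD 1%E. rewrite mul1e in h1. rewrite -h1.
  rewrite ge0_integral_bigsetU //.
  rewrite big_filter.
  rewrite (eq_bigr (fun S => (('C(n, tau))%:R^-1)%:E)); last first.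
    by move=> S /eqP cS; rewrite integral_cst // mul1e; apply: PE.
  rewrite sumEFin -[X in \sum_(_ | _) X]mulr1 -mulr_sumr s0 mulVf //.
have PnD : P (~` D) = 0%E by rewrite probability_setC // PD subee.
have mf : measurable_fun setT (fun w => (h (fun i => v i w))%:E) by apply/measurable_realfun.measurable_EFinP.
rewrite -(setUv D) ge0_integral_setU //; last 4 first.
- exact: measurableC.
- by rewrite setUv.
- by move=> x _; rewrite lee_fin.
- rewrite disj_set2E; apply/eqP; exact: setICr.
rewrite (@null_set_integral _ _ _ P (~` D)) //; last 2 first.
- exact: measurableC.
- exact: measurable_funS mf.
rewrite adde0 ge0_integral_bigsetU //; last 2 first.
- exact: measurable_funS mf.
- by move=> x _; rewrite lee_fin.
rewrite big_filter.
rewrite (eq_bigr (fun S => ((h (@pat R n tau S)) * ('C(n, tau))%:R^-1)%:E)); last first.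
  move=> S /eqP cS.
  rewrite (eq_integral (fun _ => (h (@pat R n tau S))%:E)); last first.
    by move=> x; rewrite inE => /EPS ->.
  rewrite (integral_cst P (mE S) (h (@pat R n tau S))%:E).
  by rewrite EFinM; congr (_ * _)%E; apply: PE.
by rewrite sumEFin mulr_sumr; congr (_%:E); apply: eq_bigr => S _; rewrite mulrC.
Qed.

End BSec.

Lemma diff_eq (R : realType) dim n (F : 'I_n -> 'rV[R]_dim -> 'rV[R]_dim) (c : 'I_n -> R) x xs :
  Fv F c x - Fv F c xs - (Fmean F x - Fmean F xs) = \sum_i (n%:R^-1 * (c i - 1)) *: (F i x - F i xs).
Proof.
rewrite /Fv /Fmean -!scalerBr -!sumrB scaler_sumr; apply: eq_bigr => i _.
by rewrite -scalerA scalerBl scale1r !scalerBr.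
Qed.

Lemma xs_eq (R : realType) dim n (F : 'I_n -> 'rV[R]_dim -> 'rV[R]_dim) (c : 'I_n -> R) xs :
  Fmean F xs = 0 -> Fv F c xs = \sum_i (n%:R^-1 * (c i - 1)) *: F i xs.
Proof.
move=> h0; have -> : Fv F c xs = Fv F c xs - Fmean F xs by rewrite h0 subr0.
rewrite /Fv /Fmean -scalerBr -sumrB scaler_sumr.
by apply: eq_bigr => i _; rewrite -scalerA scalerBl scale1r.
Qed.

Lemma sqnorm_ge0 (R : realType) dim (u : 'rV[R]_dim) : 0 <= sqnorm u.
Proof. by apply: sumr_ge0 => j _; exact: sqr_ge0. Qed.

Lemma lip_sq (R : realType) dim (G : 'rV[R]_dim -> 'rV[R]_dim) L x y :
  is_lipschitz G L -> sqnorm (G x - G y) <= L ^+ 2 * sqnorm (x - y).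
Proof.
move=> /(_ x y) h.
have e1 : sqnorm (G x - G y) = enorm (G x - G y) ^+ 2 by rewrite /enorm sqr_sqrtr // sqnorm_ge0.
have e2 : sqnorm (x - y) = enorm (x - y) ^+ 2 by rewrite /enorm sqr_sqrtr // sqnorm_ge0.
rewrite e1 e2 -exprMn; apply: lerXn2r => //; rewrite ?nnegrE ?sqrtr_ge0 //.
exact: le_trans (sqrtr_ge0 _) h.
Qed.

Lemma cs_scal (R : realType) n (y : 'I_n -> R) : (\sum_i y i) ^+ 2 <= n%:R * \sum_i y i ^+ 2.
Proof.
have H : 2 * (n%:R * \sum_i y i ^+ 2 - (\sum_i y i) ^+ 2) = \sum_i \sum_j (y i - y j) ^+ 2.
  have -> : \sum_i \sum_j (y i - y j) ^+ 2 = \sum_i \sum_j (y i ^+ 2 + y j ^+ 2 - 2 * (y i * y j)).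
    by apply: eq_bigr => i _; apply: eq_bigr => j _; ring.
  under [RHS]eq_bigr => i _ do rewrite sumrB big_split /= sumr_const card_ord -mulr_sumr.
  rewrite sumrB big_split /= sumr_const card_ord -mulr_sumr -sqr_sum -mulr_natl.
  rewrite sumrMnl. set Q := \sum_(i < n) y i ^+ 2. rewrite -[Q *+ n]mulr_natl. ring.
rewrite -subr_ge0 -(@pmulr_rge0 _ 2) // H.
by apply: sumr_ge0 => i _; apply: sumr_ge0 => j _; exact: sqr_ge0.
Qed.

Lemma cs_vec (R : realType) n dim (c : 'I_n -> R) (a : 'I_n -> 'rV[R]_dim) :
  sqnorm (\sum_i c i *: a i) <= n%:R * \sum_i c i ^+ 2 * sqnorm (a i).
Proof.
rewrite sq_coord.
apply: (@le_trans _ _ (\sum_j n%:R * \sum_i (c i * a i ord0 j) ^+ 2)).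
  by apply: ler_sum => j _; exact: cs_scal.
rewrite -mulr_sumr ler_wpM2l // exchange_big /=.
rewrite le_eqVlt; apply/orP; left; apply/eqP. apply: eq_bigr => i _. rewrite /sqnorm mulr_sumr.
by apply: eq_bigr => j _; rewrite exprMn.
Qed.


Theorem proposition3p3 (R : realType) (dim n : nat)
  (F : 'I_n -> 'rV[R]_dim -> 'rV[R]_dim) (L : 'I_n -> R)
  (xs : 'rV[R]_dim)
  (dsp : measure_display) (T : measurableType dsp) (P : probability T R)
  (v : 'I_n -> T -> R) :
  (forall i, is_lipschitz (F i) (L i)) ->
  Fmean F xs = 0 ->
  (forall i, measurable_fun setT (v i)) ->
  (forall i w, 0 <= v i w) ->
  (forall i, P.-integrable setT (fun w => (v i w)%:E)) ->
  (forall i, (\int[P]_w (v i w)%:E)%E = 1%E) ->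
  (forall i, P.-integrable setT (fun w => (v i w ^+ 2)%:E)) ->
  (exists delta : R, forall x : 'rV[R]_dim,
     (\int[P]_w (sqnorm ((Fv F (fun i => v i w) x - Fv F (fun i => v i w) xs)
                          - (Fmean F x - Fmean F xs)))%:E
      <= (delta / 2 * sqnorm (x - xs))%:E)%E)
  /\
  (forall tau : nat, (2 <= n)%N -> (1 <= tau <= n)%N ->
     minibatch_sampling P v tau ->
     let delta := 2 / (n%:R * tau%:R) * ((n - tau)%:R / (n - 1)%:R)
                  * \sum_(i < n) L i ^+ 2 in
     (forall x : 'rV[R]_dim,
       (\int[P]_w (sqnorm ((Fv F (fun i => v i w) x - Fv F (fun i => v i w) xs)
                          - (Fmean F x - Fmean F xs)))%:E
        <= (delta / 2 * sqnorm (x - xs))%:E)%E)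
     /\
     (\int[P]_w (sqnorm (Fv F (fun i => v i w) xs))%:E)%E
       = (1 / (n%:R * tau%:R) * ((n - tau)%:R / (n - 1)%:R)
          * \sum_(i < n) sqnorm (F i xs))%:E).
Proof.
move=> hL hF mv v0 iv iv1 iv2.
have mc : forall i, measurable_fun setT (fun w => n%:R^-1 * (v i w - 1)).
  move=> i; apply: measurable_realfun.measurable_funM; first exact: measurable_cst.
  by apply: measurable_realfun.measurable_funB => //; exact: measurable_cst.
split.
  set e := fun i => fine (\int[P]_w (v i w ^+ 2)%:E)%E.
  have fe : forall i, (\int[P]_w (v i w ^+ 2)%:E)%E = (e i)%:E.
    by move=> i; rewrite fineK // integrable_fin_num.
  set V := fun w => \sum_k (v k w ^+ 2 + 1).
  have mV : measurable_fun setT V.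
    apply: measurable_sum => k; apply: measurable_realfun.measurable_funD; last exact: measurable_cst.
    exact: measurable_realfun.measurable_funX.
  have IV : (\int[P]_w (V w)%:E)%E = (\sum_k (e k + 1))%:E.
    rewrite /V. under eq_integral => w _ do rewrite -sumEFin.
    rewrite ge0_integral_sum //; last 2 first.
    - move=> k; apply/measurable_realfun.measurable_EFinP; apply: measurable_realfun.measurable_funD; last exact: measurable_cst.
      exact: measurable_realfun.measurable_funX.
    - by move=> k w _; rewrite lee_fin addr_ge0 // sqr_ge0.
    rewrite -sumEFin; apply: eq_bigr => k _.
    under eq_integral => w _ do rewrite EFinD.
    rewrite ge0_integralD //; last 2 first.
    - by move=> w _; rewrite lee_fin sqr_ge0.
    - by apply/measurable_realfun.measurable_EFinP; exact: measurable_realfun.measurable_funX.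
    rewrite fe (integral_cst P measurableT 1%E) EFinD mul1e.
    by congr (_ + _)%E; exact: probability_setT.
  exists (2 * (n%:R^-1 * (\sum_i L i ^+ 2) * \sum_k (e k + 1))) => x.
  set s := sqnorm (x - xs).
  have s0 : 0 <= s by exact: sqnorm_ge0.
  set c0 := n%:R^-1 * (\sum_i L i ^+ 2) * s.
  have c00 : 0 <= c0.
    by rewrite /c0 !mulr_ge0 // ?invr_ge0 // sumr_ge0 // => i _; exact: sqr_ge0.
  under eq_integral => w _ do rewrite diff_eq.
  apply: (@le_trans _ _ (\int[P]_w (c0 * V w)%:E)%E).
    apply: ge0_le_integral => //.
    - by move=> w _; rewrite lee_fin sqnorm_ge0.
    - by apply/measurable_realfun.measurable_EFinP; exact: meas_sq.
    - apply/measurable_realfun.measurable_EFinP; apply: measurable_realfun.measurable_funM => //; exact: measurable_cst.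
    move=> w _; rewrite lee_fin.
    apply: (le_trans (cs_vec R n dim _ _)).
    have -> : c0 * V w = \sum_i (n%:R^-1 * (L i ^+ 2 * s)) * V w.
      by rewrite -mulr_suml -mulr_sumr -mulr_suml /c0; ring.
    rewrite mulr_sumr; apply: ler_sum => i _.
    have npos : (0 < n%:R :> R) by rewrite ltr0n (leq_ltn_trans _ (ltn_ord i)).
    have -> : n%:R * ((n%:R^-1 * (v i w - 1)) ^+ 2 * sqnorm (F i x - F i xs))
       = n%:R^-1 * ((v i w - 1) ^+ 2 * sqnorm (F i x - F i xs)).
      by field; rewrite gt_eqF.
    rewrite -mulrA; apply: ler_wpM2l; first by rewrite invr_ge0 ltW.
    rewrite mulrC.
    apply: ler_pM.
    - exact: sqnorm_ge0.
    - exact: sqr_ge0.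
    - exact: lip_sq.
    apply: (@le_trans _ _ (v i w ^+ 2 + 1)).
      have := v0 i w; nra.
    rewrite /V (bigD1 i) //= lerDl; apply: sumr_ge0 => k _.
    by rewrite addr_ge0 // sqr_ge0.
  under eq_integral => w _ do rewrite EFinM.
  rewrite ge0_integralZl_EFin //; last 2 first.
  - by move=> w _; rewrite lee_fin /V sumr_ge0 // => k _; rewrite addr_ge0 // sqr_ge0.
  - by apply/measurable_realfun.measurable_EFinP.
  rewrite IV -EFinM lee_fin le_eqVlt; apply/orP; left; apply/eqP.
  rewrite [2 * _]mulrC mulfK ?/c0; [ring | by []].
move=> tau n2 tn mb delta.
have tn' := tn; move/andP: tn' => [t1 tle].
have nz : (n%:R : R) != 0 by rewrite pnatr_eq0 -lt0n (leq_trans _ n2).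
have tz : (tau%:R : R) != 0 by rewrite pnatr_eq0 -lt0n.
have n1z : ((n - 1)%:R : R) != 0 by rewrite pnatr_eq0 subn_eq0 -ltnNge.
have Cz : (('C(n, tau))%:R : R) != 0 by rewrite pnatr_eq0 -lt0n bin_gt0.
have kap0 : 0 <= ((n - tau)%:R / (tau%:R * (n.-1)%:R) : R).
  by rewrite mulr_ge0 // invr_ge0 mulr_ge0.
split.
  move=> x.
  under eq_integral => w _ do rewrite diff_eq.
  have mh : measurable_fun setT (fun w => sqnorm (\sum_i (n%:R^-1 * (v i w - 1)) *: (F i x - F i xs))).
    exact: meas_sq.
  rewrite (@expect_mb _ _ _ P n v tau (fun c => sqnorm (\sum_i (n%:R^-1 * (c i - 1)) *: (F i x - F i xs))) tn mv mh (fun c => sqnorm_ge0 _ _ _) mb).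
  rewrite (vec_eq R n tau dim (fun i => F i x - F i xs) n2 tn) lee_fin.
  set Q := \sum_i sqnorm (F i x - F i xs).
  set Z := sqnorm (\sum_i (F i x - F i xs)).
  set k := ((n - tau)%:R / (tau%:R * (n.-1)%:R) : R).
  have -> : ('C(n, tau))%:R^-1 * (('C(n, tau))%:R * k * n%:R^-2 * (n%:R * Q - Z))
     = k * n%:R^-1 * Q - k * n%:R^-2 * Z by field; rewrite ?Cz ?nz.
  apply: (@le_trans _ _ (k * n%:R^-1 * Q)).
    by rewrite lerBlDr lerDl !mulr_ge0 // ?invr_ge0 ?exprn_ge0 // sqnorm_ge0.
  have -> : delta / 2 * sqnorm (x - xs) = k * n%:R^-1 * \sum_i (L i ^+ 2 * sqnorm (x - xs)).
    rewrite /delta /k -mulr_suml -subn1.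
    field. by rewrite nz tz n1z.
  apply: ler_wpM2l; first by rewrite mulr_ge0 // invr_ge0.
  by apply: ler_sum => i _; exact: lip_sq.
under eq_integral => w _ do rewrite (xs_eq R dim n F _ xs hF).
have mh : measurable_fun setT (fun w => sqnorm (\sum_i (n%:R^-1 * (v i w - 1)) *: F i xs)).
  exact: meas_sq.
rewrite (@expect_mb _ _ _ P n v tau (fun c => sqnorm (\sum_i (n%:R^-1 * (c i - 1)) *: F i xs)) tn mv mh (fun c => sqnorm_ge0 _ _ _) mb).
rewrite (vec_eq R n tau dim (fun i => F i xs) n2 tn).
have sF : \sum_i F i xs = 0.
  move: hF; rewrite /Fmean => /eqP; rewrite scaler_eq0 invr_eq0 (negbTE nz) /=.
  by move/eqP.
have z0 : sqnorm (0 : 'rV[R]_dim) = 0.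
  by rewrite /sqnorm big1 // => j _; rewrite mxE expr0n.
rewrite sF z0 subr0 -subn1; congr (_%:E).
field. by rewrite ?Cz ?nz ?tz ?n1z.
Qed.
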